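(* Let $r,d:[0,\infty)\to\mathbb{R}$ be Lipschitz continuous functions satisfying $r(0)>d(0)>0$, $r'<0$, $r(+\infty)=0$ and $d'>0$. Let $n_C^0\ge 0$ be an integrable function on $[0,\infty)$ which is positive on a neighbourhood of $x=0$, and let $n_C(x,t)$ be the solution of $$\frac{\partial}{\partial t} n_C(x,t)=\big[r(x)-d(x)\big]\,n_C(x,t),\qquad x\ge 0,\ t>0,\qquad n_C(x,0)=n_C^0(x)$$ (i.e. the cancer-cell model with no therapy, $c(t)\equiv 0$, and no mutations, $\theta_C=0$). Set $\rho_C(t)=\int_0^\infty n_C(x,t)\,dx$. Then $\rho_C(t)\to\infty$ as $t\to\infty$ with an exponential rate (there exist $\lambda>0$ and $C>0$ with $\rho_C(t)\ge Ce^{\lambda t}$ for all $t\ge0$), and $$\frac{n_C(\cdot,t)}{\rho_C(t)}\longrightarrow \delta(x)\quad\text{as } t\to\infty,$$ weakly in the sense of measures.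
   Context: $n_C(x,t)$ is the density of cancer cells with resistance-gene expression level $x\in[0,\infty)$ at time $t$; $r$ is the reproduction rate and $d$ the death rate; $\delta(x)$ is the Dirac mass at $x=0$. *)

(* Defs.v *)
From HB Require Import structures.
From mathcomp Require Import all_boot all_order all_algebra.
From mathcomp Require Import all_classical all_reals all_analysis.
Set Implicit Arguments. Unset Strict Implicit. Unset Printing Implicit Defensive.
Import Order.TTheory GRing.Theory Num.Theory.
Import numFieldNormedType.Exports.
Local Open Scope classical_set_scope.
Local Open Scope ring_scope.

Definition lipschitz_on_halfline {R : realType} (f : R -> R) : Prop :=
  exists k : R, forall x y : R, 0 <= x -> 0 <= y -> `|f x - f y| <= k * `|x - y|.

Definition rhoC {R : realType} (n : R -> R -> R) (t : R) : R :=
  Rintegral (@lebesgue_measure R) `[0%R, +oo[ (fun x => n x t).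

Definition bounded_continuous_halfline {R : realType} (phi : R -> R) : Prop :=
  {within `[0%R, +oo[, continuous phi} /\
  exists M : R, forall x : R, 0 <= x -> `|phi x| <= M.

Definition weak_cvg_to_dirac0 {R : realType} (n : R -> R -> R) : Prop :=
  forall phi : R -> R, bounded_continuous_halfline phi ->
    (Rintegral (@lebesgue_measure R) `[0%R, +oo[ (fun x => phi x * n x t)
       / rhoC n t) @[t --> +oo] --> phi 0.

(* Main.v *)
Require Import Defs.
From HB Require Import structures.
From mathcomp Require Import all_boot all_order all_algebra.
From mathcomp Require Import all_classical all_reals all_analysis.
From mathcomp Require Import ring lra.
Import Order.TTheory GRing.Theory Num.Theory.
Import numFieldNormedType.Exports.
Local Open Scope classical_set_scope.
Local Open Scope ring_scope.
Lemma sol_formula (R : realType) (c y0 : R) (f : R -> R) :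
  f 0 = y0 -> f t @[t --> 0^'+] --> y0 ->
  (forall t, 0 < t -> derivable f t 1 /\ derive1 f t = c * f t) ->
  forall t, 0 <= t -> f t = y0 * expR (c * t).
Proof.
move=> f0 fcv fd t; rewrite le_eqVlt => /predU1P[<-|t0].
  by rewrite mulr0 expR0 mulr1.
pose h u := f u * expR (- c * u).
have Ed (u : R) : is_derive u 1 (fun v => expR (- c * v)) (expR (- c * u) * (- c)).
    have L : is_derive u 1 (fun v : R => - c * v) (- c).
      have L0 := is_deriveZ (- c) (is_derive_id u (1:R)).
      have L1 : (- c) *: (1:R) = - c by rewrite /GRing.scale /= mulr1.
      rewrite L1 in L0.
      exact: L0.
    exact: (@is_derive1_comp _ expR (fun v => - c * v) u _ _ (is_derive_expR (- c * u)) L).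
have hd (u : R) : 0 < u -> is_derive u 1 h 0.
  move=> u0; have [fdu fdv] := fd u u0.
  have F : is_derive u 1 f (c * f u).
    by apply: DeriveDef => //; rewrite -derive1E.
  have E := Ed u.
  have := is_deriveM F E; move/is_derive_eq; apply.
  by rewrite /GRing.scale /=; ring.
have hc (s u : R) : 0 < s -> s <= u -> h u = h s.
  move=> s0 su.
  have D : forall z, z \in `]s, u[ -> is_derive z 1 h 0.
    move=> z; rewrite in_itv /= => /andP[sz _]; apply: hd.
    exact: lt_trans s0 sz.
  have C : {within `[s, u], continuous h}.
    apply: derivable_within_continuous => z; rewrite in_itv /= => /andP[sz _].
    exact: (@ex_derive _ _ _ _ _ _ _ (hd z (lt_le_trans s0 sz))).
  have [z _] := MVT_segment su D C.
  by rewrite mul0r => /eqP; rewrite subr_eq0 => /eqP.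
have hl : h u @[u --> 0^'+] --> y0.
  have E0 : expR (- c * u) @[u --> 0^'+] --> expR (- c * 0).
    apply: cvg_at_right_filter.
    have D0 := (@ex_derive _ _ _ _ _ _ _ (Ed 0)).
    move/derivable1_diffP: D0 => D0.
    exact: (differentiable_continuous D0).
  rewrite mulr0 expR0 in E0.
  rewrite -[y0]mulr1; exact: cvgM fcv E0.
have hl2 : h u @[u --> 0^'+] --> h t.
  apply: cvg_trans (cvg_cst (h t)).
  apply: near_eq_cvg.
  near=> u.
  rewrite /cst; apply: hc.
  - by near: u; exact: nbhs_right_gt.
  - by near: u; exact: nbhs_right_le.
  all: try typeclasses eauto.
have E : y0 = h t := norm_cvg_unique hl hl2.
rewrite E /h -mulrA -expRD.
by rewrite mulNr addNr expR0 mulr1.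
Unshelve. all: by end_near.
Qed.
Require Import Defs.
Lemma strict_decr (R : realType) (f : R -> R) :
  (forall x : R, 0 < x -> derivable f x 1 /\ derive1 f x < 0) ->
  forall x y : R, 0 < x -> x < y -> f y < f x.
Proof.
move=> fd x y x0 xy.
have y0 : 0 < y := lt_trans x0 xy.
have A1 : forall z, z \in `]0, y + 1[ -> derivable f z 1.
  move=> z; rewrite in_itv /= => /andP[z0 _]; exact: (fd z z0).1.
have A2 : forall z, z \in `]0, y + 1[ -> derive1 f z < 0.
  move=> z; rewrite in_itv /= => /andP[z0 _]; exact: (fd z z0).2.
have A3 : {in `]0, y + 1[%classic, continuous f}.
  move=> z /set_mem; rewrite /= in_itv /= => /andP[z0 _].
  exact/differentiable_continuous/derivable1_diffP/(fd z z0).1.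
have H := @ltr0_derive1_lt_oo R f 0 (y + 1) A1 A2 A3.
apply: H => //.

- rewrite in_itv /=; apply/andP; split; lra.
- rewrite in_itv /=; apply/andP; split; lra.
Qed.

Lemma strict_incr (R : realType) (f : R -> R) :
  (forall x : R, 0 < x -> derivable f x 1 /\ derive1 f x > 0) ->
  forall x y : R, 0 < x -> x < y -> f x < f y.
Proof.
move=> fd x y x0 xy.
rewrite -ltrN2; apply: (@strict_decr R (fun z => - f z)) => // z z0.
have [dz dz0] := fd z z0; split; first exact: derivableN.
by rewrite derive1E deriveN // -derive1E oppr_lt0.
Qed.

Lemma lip0 (R : realType) (f : R -> R) : lipschitz_on_halfline f ->
  exists K : R, 0 <= K /\ forall x : R, 0 <= x -> `|f x - f 0| <= K * x.
Proof.
move=> [k hk]; exists `|k|; split => // x x0.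
apply: le_trans (hk x 0 x0 (lexx 0)) _.
by rewrite subr0 ger0_norm // ler_wpM2r // ler_norm.
Qed.
Lemma lipT_cont (R : realType) (f : R -> R) (K : R) : 0 <= K ->
  (forall x y, `|f x - f y| <= K * `|x - y|) -> continuous f.
Proof.
move=> K0 hf x; apply/cvgrPdist_lt => e e0.
have K1 : 0 < K + 1 by lra.
near=> y.
apply: (le_lt_trans (hf x y)).
apply: (@le_lt_trans _ _ ((K + 1) * `|x - y|)).
  by rewrite ler_wpM2r // lerDl.
rewrite -ltr_pdivlMl //.
near: y; apply/nbhs_normP; exists (e / (K + 1)).
  by rewrite /= divr_gt0.
by move=> z /=; rewrite mulrC.
Unshelve. all: by end_near.
Qed.
Lemma lip_meas (R : realType) (f : R -> R) : (exists k : R, forall x y : R, 0 <= x -> 0 <= y -> `|f x - f y| <= k * `|x - y|) ->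
  measurable_fun (`[0%R, +oo[ : set R) f.
Proof.
move=> [k hk].
pose f' x := if x < 0 then f 0 else f x.
have hk' x y : 0 <= x -> 0 <= y -> `|f x - f y| <= `|k| * `|x - y|.
  move=> x0 y0; apply: le_trans (hk x y x0 y0) _.
  by rewrite ler_wpM2r // ler_norm.
have cf : continuous f'.
  apply: (@lipT_cont _ _ `|k|) => // x y; rewrite /f'.
  have [x0|x0] := ltP x 0; have [y0|y0] := ltP y 0.
  - by rewrite subrr normr0 mulr_ge0.
  - apply: le_trans (hk' _ _ (lexx 0) y0) _; rewrite ler_wpM2l //.
    by rewrite sub0r normrN (ger0_norm y0) ler0_norm; lra.
  - apply: le_trans (hk' _ _ x0 (lexx 0)) _; rewrite ler_wpM2l //.
    by rewrite subr0 (ger0_norm x0) ger0_norm; lra.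
  - exact: hk'.
apply: (eq_measurable_fun f').
  move=> x; rewrite inE /= in_itv /= andbT => x0.
  by rewrite /f' ltNge x0.
exact: measurable_funTS (measurable_realfun.continuous_measurable_fun cf).
Qed.
Lemma pos_int (R : realType) (n0 : R -> R) (a : R) : 0 < a ->
  measurable_fun (`]0%R, a%R] : set R) n0 ->
  (forall x, 0 < x <= a -> 0 < n0 x) ->
  (0 < \int[@lebesgue_measure R]_(x in (`]0%R, a%R] : set R)) (n0 x)%:E)%E.
Proof.
move=> a0 mn0 pn0.
have ge0 : (0 <= \int[@lebesgue_measure R]_(x in (`]0%R, a%R] : set R)) (n0 x)%:E)%E.
  apply: integral_ge0 => x /=; rewrite in_itv /= => xi.
  by rewrite lee_fin ltW // pn0.
rewrite lt_neqAle ge0 andbT; apply/negP => /eqP E.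
have E2 : (\int[@lebesgue_measure R]_(x in (`]0%R, a%R] : set R)) `|(EFin \o n0) x|)%E = 0.
  rewrite E; apply: eq_integral => x; rewrite inE /= in_itv /= => xi.
  by rewrite /= ger0_norm // ltW // pn0.
have mn0' := proj2 (measurable_realfun.measurable_EFinP _ _) mn0.
have [N [mN N0 sub]] := (ae_eq_integral_abs (@lebesgue_measure R) (measurable_itv _) mn0').1 E2.
have SN : (`]0%R, a%R] : set R) `<=` N.
  move=> x xi; apply: sub => /= H.
  have := H xi; move: xi; rewrite /= in_itv /= => /pn0 p [] p0.
  by rewrite p0 ltxx in p.
have HS : @lebesgue_measure R (`]0%R, a%R] : set R) = 0.
  exact: (@subset_measure0 _ _ _ (@lebesgue_measure R) _ N (measurable_itv _) mN SN N0).
move: HS; rewrite lebesgue_measure_itv /= lte_fin a0 /= sube0 => /eqP.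
by rewrite eqe gt_eqF.
Qed.

Lemma meas_nt (R : realType) (g n0 : R -> R) (n : R -> R -> R) (t : R) :
  (forall x t, 0 <= x -> 0 <= t -> n x t = n0 x * expR (g x * t)) ->
  measurable_fun (`[0%R, +oo[ : set R) g ->
  measurable_fun (`[0%R, +oo[ : set R) n0 -> 0 <= t ->
  measurable_fun (`[0%R, +oo[ : set R) (fun x => n x t).
Proof.
move=> hs mg mn0 t0.
apply: (eq_measurable_fun (fun x => n0 x * expR (g x * t))).
  move=> x; rewrite inE /= in_itv /= andbT => x0; by rewrite hs.
apply: measurable_realfun.measurable_funM => //.
apply: measurableT_comp; first exact: measurable_realfun.measurable_expR.
by apply: measurable_realfun.measurable_funM.
Qed.

Lemma int_nt (R : realType) (g n0 : R -> R) (n : R -> R -> R) (B t : R) :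
  (forall x t, 0 <= x -> 0 <= t -> n x t = n0 x * expR (g x * t)) ->
  measurable_fun (`[0%R, +oo[ : set R) g ->
  (forall x, 0 <= x -> g x <= B) ->
  (forall x, 0 <= x -> 0 <= n0 x) ->
  (@lebesgue_measure R).-integrable `[0%R, +oo[ (EFin \o n0) -> 0 <= t ->
  (@lebesgue_measure R).-integrable `[0%R, +oo[ (EFin \o (fun x => n x t)).
Proof.
move=> hs mg gB n0p in0 t0.
have mn0 : measurable_fun (`[0%R, +oo[ : set R) n0.
  apply/measurable_realfun.measurable_EFinP; exact: (measurable_int _ in0).
apply: (le_integrable _ _ _ (integrableZl _ (expR (B * t)) in0)).
- exact: measurable_itv.
- have M1 := @meas_nt _ _ _ _ t hs mg mn0 t0.
  exact: (proj2 (measurable_realfun.measurable_EFinP _ _) M1).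
- move=> x /=; rewrite in_itv /= andbT => x0.
  rewrite hs // lee_fin ger0_norm; last first.
    by rewrite mulr_ge0 // n0p.
  rewrite ger0_norm; last by rewrite mulr_ge0 // n0p.
  rewrite mulrC ler_wpM2r ?n0p // ler_expR ler_wpM2r //.
  exact: gB.
- exact: measurable_itv.
Qed.

Lemma lower_bd (R : realType) (g n0 : R -> R) (n : R -> R -> R) (B a : R) :
  (forall x t, 0 <= x -> 0 <= t -> n x t = n0 x * expR (g x * t)) ->
  measurable_fun (`[0%R, +oo[ : set R) g ->
  (forall x, 0 <= x -> g x <= B) ->
  (forall x y, 0 < x -> x < y -> g y < g x) ->
  (forall x, 0 <= x -> 0 <= n0 x) ->
  (@lebesgue_measure R).-integrable `[0%R, +oo[ (EFin \o n0) ->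
  0 < a -> (forall x, 0 < x <= a -> 0 < n0 x) ->
  0 < fine (\int[@lebesgue_measure R]_(x in `]0%R, a%R]) (n0 x)%:E)%E /\
  forall t, 0 <= t ->
    fine (\int[@lebesgue_measure R]_(x in `]0%R, a%R]) (n0 x)%:E)%E
      * expR (g a * t) <= rhoC n t.
Proof.
move=> hs mg gB gdec n0p in0 a0 pn0.
have mn0 : measurable_fun (`[0%R, +oo[ : set R) n0.
  apply/measurable_realfun.measurable_EFinP; exact: (measurable_int _ in0).
have sub : (`]0%R, a%R] : set R) `<=` `[0%R, +oo[.
  by move=> x /=; rewrite !in_itv /= andbT => /andP[/ltW].
have mn0a : measurable_fun (`]0%R, a%R] : set R) n0.
  exact: (measurable_funS _ sub mn0).
have inta : (@lebesgue_measure R).-integrable `]0%R, a%R] (EFin \o n0).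
  have := @integrableS _ _ _ (@lebesgue_measure R) `[0%R, +oo[ `]0%R, a%R] (EFin \o n0).
  apply; [exact: measurable_itv|exact: measurable_itv| |exact: in0].
  by move=> x /=; rewrite !in_itv /= andbT => /andP[/ltW].
have fin : (\int[@lebesgue_measure R]_(x in `]0%R, a%R]) (n0 x)%:E)%E \is a fin_num.
  exact: (integrable_fin_num _ inta).
have Ipos := @pos_int _ n0 a a0 mn0a pn0.
split.
  by apply: fine_gt0; rewrite Ipos /= -ge0_fin_numE ?fin // ltW.
move=> t t0.
have intt := @int_nt _ _ _ _ _ t hs mg gB n0p in0 t0.
have finJ : (\int[@lebesgue_measure R]_(x in `[0%R, +oo[) (n x t)%:E)%E \is a fin_num.
  by apply: (integrable_fin_num _ intt); exact: measurable_itv.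
have mnt := @meas_nt _ _ _ _ t hs mg mn0 t0.
have mnta : measurable_fun (`]0%R, a%R] : set R) (fun x => n x t).
  exact: (measurable_funS _ sub mnt).
rewrite /rhoC /Rintegral -lee_fin EFinM fineK // fineK //.
apply: (@le_trans _ _ (\int[@lebesgue_measure R]_(x in `]0%R, a%R]) (n x t)%:E)%E).
- have EZ : (\int[@lebesgue_measure R]_(x in `]0%R, a%R]) ((expR (g a * t))%:E * (n0 x)%:E) = (expR (g a * t))%:E * \int[@lebesgue_measure R]_(x in `]0%R, a%R]) (n0 x)%:E)%E.
    apply: (@ge0_integralZl _ _ _ (@lebesgue_measure R) `]0%R, a%R] _ (fun x => (n0 x)%:E) _ (expR (g a * t))%:E) => //.
    + exact: (proj2 (measurable_realfun.measurable_EFinP _ _) mn0a).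
    + move=> x /=; rewrite in_itv /= => /andP[x0 xa].
      by rewrite lee_fin n0p // ltW.
  rewrite muleC -EZ.
  + apply: ge0_le_integral => //.
    * move=> x /=; rewrite in_itv /= => /andP[x0 xa].
      by rewrite -EFinM lee_fin mulr_ge0 // n0p // ltW.
    * have M1 : measurable_fun (`]0%R, a%R] : set R) (fun x => expR (g a * t) * n0 x).
        exact: measurable_realfun.measurable_funM.
      exact: (proj2 (measurable_realfun.measurable_EFinP _ _) M1).
    * exact: (proj2 (measurable_realfun.measurable_EFinP _ _) mnta).
    * move=> x /=; rewrite in_itv /= => /andP[x0 xa].
      rewrite -EFinM lee_fin (hs x t (ltW x0) t0) [n0 x * _]mulrC.
      rewrite ler_wpM2r ?n0p ?(ltW x0) // ler_expR ler_wpM2r //.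
      move: xa; rewrite le_eqVlt => /predU1P[-> //|xa].
      exact/ltW/gdec.
- apply: ge0_subset_integral.
  + exact: measurable_itv.
  + exact: measurable_itv.
  + exact: (proj2 (measurable_realfun.measurable_EFinP _ _) mnt).
  + move=> x /=; rewrite in_itv /= andbT => x0.
    by rewrite lee_fin hs // mulr_ge0 ?n0p // expR_ge0.
  + by move=> x /=; rewrite !in_itv /= andbT => /andP[/ltW].
Qed.

Lemma growth (R : realType) (rho : R -> R) (c lam : R) : 0 < c -> 0 < lam ->
  (forall t, 0 <= t -> c * expR (lam * t) <= rho t) ->
  rho t @[t --> +oo] --> +oo.
Proof.
move=> c0 l0 H; apply/cvgryPge => A.
near=> t.
have t0 : 0 <= t by near: t; apply: nbhs_pinfty_ge; exact: num_real.
have tA : `|A| / (c * lam) <= t.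
  by near: t; apply: nbhs_pinfty_ge; exact: num_real.
apply: le_trans (H t t0).
apply: (@le_trans _ _ (c * (1 + lam * t))); last first.
  apply: ler_wpM2l; [exact: ltW | exact: expR_ge1Dx].
have cl0 : 0 < c * lam by rewrite mulr_gt0.
move: tA; rewrite ler_pdivrMr // => tA.
apply: le_trans (ler_norm A) _.
apply: le_trans tA _.
have : 0 <= c * lam * t by rewrite mulr_ge0 // ltW.
nra.
Unshelve. all: by end_near.
Qed.

Lemma decay (R : realType) (K m e : R) : 0 < m -> 0 < e ->
  \forall t \near +oo, K * expR (- m * t) < e.
Proof.
move=> m0 e0.
near=> t.
have t0 : 0 <= t by near: t; apply: nbhs_pinfty_ge; exact: num_real.
have tK : `|K| / (e * m) < t.
  by near: t; apply: nbhs_pinfty_gt; exact: num_real.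
have em0 : 0 < e * m by rewrite mulr_gt0.
move: tK; rewrite ltr_pdivrMr // => tK.
have E1 : 1 + m * t <= expR (m * t) := expR_ge1Dx _.
have Ep : 0 < expR (m * t) := expR_gt0 _.
rewrite mulNr expRN.
apply: (@le_lt_trans _ _ (`|K| * (expR (m * t))^-1)).
  by apply: ler_wpM2r; [rewrite invr_ge0 ltW | exact: ler_norm].
rewrite ltr_pdivrMr //.
have : e * (1 + m * t) <= e * expR (m * t) by rewrite ler_wpM2l // ltW.
have : 0 <= e by exact: ltW.
nra.
Unshelve. all: by end_near.
Qed.

Lemma intD_le (R : realType) (f h : R -> R) :
  measurable_fun (`[0%R, +oo[ : set R) f ->
  (forall x, 0 <= x -> `|f x| <= `|h x|) ->
  (@lebesgue_measure R).-integrable `[0%R, +oo[ (EFin \o h) ->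
  (@lebesgue_measure R).-integrable `[0%R, +oo[ (EFin \o f).
Proof.
move=> mf fh ih.
apply: (le_integrable _ _ _ ih).
- exact: measurable_itv.
- exact: (proj2 (measurable_realfun.measurable_EFinP _ _) mf).
- move=> x /=; rewrite in_itv /= andbT => x0.
  by rewrite lee_fin fh.
Qed.

Lemma intD_lin (R : realType) (a b : R) (f h : R -> R) :
  (@lebesgue_measure R).-integrable `[0%R, +oo[ (EFin \o f) ->
  (@lebesgue_measure R).-integrable `[0%R, +oo[ (EFin \o h) ->
  (@lebesgue_measure R).-integrable `[0%R, +oo[ (EFin \o (fun x => a * f x + b * h x)).
Proof.
move=> iF iH.
have := integrableD _ (integrableZl _ a iF) (integrableZl _ b iH).
move=> /(_ (measurable_itv _) (measurable_itv _) (measurable_itv _)).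
apply: eq_integrable; first exact: measurable_itv.
by move=> x _ /=; rewrite EFinD !EFinM.
Qed.

Lemma delta_of (R : realType) (phi : R -> R) (e : R) :
  {within `[0%R, +oo[, continuous phi} -> 0 < e ->
  exists2 del : R, 0 < del & forall x, 0 <= x < del -> `|phi 0 - phi x| < e.
Proof.
move=> cphi e0.
have [_ phir] := (continuous_within_itvcyP 0 phi).1 cphi.
move/cvgrPdist_lt : phir => /(_ e e0).
rewrite /at_right near_withinE => /nbhs_normP [del /= del0 H].
exists del => // x /andP[x0 xd].
move: x0; rewrite le_eqVlt => /predU1P[<-|x0].
  by rewrite subrr normr0.
apply: H => //=.
by rewrite sub0r normrN ger0_norm // ltW.
Qed.

Lemma intD_Z (R : realType) (a : R) (f : R -> R) :
  (@lebesgue_measure R).-integrable `[0%R, +oo[ (EFin \o f) ->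
  (@lebesgue_measure R).-integrable `[0%R, +oo[ (EFin \o (fun x => a * f x)).
Proof.
move=> iF; have := @intD_lin _ a 0 f f iF iF.
apply: eq_integrable; first exact: measurable_itv.
by move=> x _ /=; rewrite mul0r addr0.
Qed.

Lemma weak (R : realType) (g n0 : R -> R) (n : R -> R -> R) (B eps : R) :
  (forall x t, 0 <= x -> 0 <= t -> n x t = n0 x * expR (g x * t)) ->
  measurable_fun (`[0%R, +oo[ : set R) g ->
  (forall x, 0 <= x -> g x <= B) ->
  (forall x y, 0 < x -> x < y -> g y < g x) ->
  (forall x, 0 <= x -> 0 <= n0 x) ->
  (@lebesgue_measure R).-integrable `[0%R, +oo[ (EFin \o n0) ->
  0 < eps -> (forall x, 0 <= x < eps -> 0 < n0 x) ->
  weak_cvg_to_dirac0 n.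
Proof.
move=> hs mg gB gdec n0p in0 eps0 pn0 phi [cphi [M hM]].
have mD : measurable (`[0%R, +oo[ : set R) by exact: measurable_itv.
have mphi : measurable_fun (`[0%R, +oo[ : set R) phi.
  exact: measurable_realfun.subspace_continuous_measurable_fun mD cphi.
have mn0 : measurable_fun (`[0%R, +oo[ : set R) n0.
  apply/measurable_realfun.measurable_EFinP; exact: (measurable_int _ in0).
have M0 : 0 <= M := le_trans (normr_ge0 _) (hM 0 (lexx 0)).
apply/cvgrPdist_lt => e e0.
have e20 : 0 < e / 2 by rewrite divr_gt0.
have [del del0 Hdel] := @delta_of _ phi (e / 2) cphi e20.
have [a [a0 [ad ae]]] : exists a : R, 0 < a /\ a < del /\ a < eps.
  case: (leP del eps) => h; [exists (del / 2) | exists (eps / 2)]; lra.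
have pa : forall x, 0 < x <= a -> 0 < n0 x.
  move=> x /andP[x0 xa]; apply: pn0; rewrite ltW //=; lra.
have [cpos lb] := @lower_bd _ _ _ _ B a hs mg gB gdec n0p in0 a0 pa.
set c := fine _ in cpos lb.
pose N := \int[@lebesgue_measure R]_(x in `[0%R, +oo[) n0 x.
have N0 : 0 <= N.
  apply: Rintegral_ge0 => x /=; rewrite in_itv /= andbT; exact: n0p.
have m0 : 0 < g a - g del by rewrite subr_gt0; exact: gdec.
near=> t.
have t0 : 0 <= t by near: t; apply: nbhs_pinfty_ge; exact: num_real.
have sm : (2 * M * N / c) * expR (- (g a - g del) * t) < e / 2.
  by near: t; exact: decay.
have rpos : 0 < rhoC n t.
  exact: lt_le_trans (mulr_gt0 cpos (expR_gt0 _)) (lb t t0).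
have iN := @int_nt _ _ _ _ _ t hs mg gB n0p in0 t0.
have mnt := @meas_nt _ _ _ _ t hs mg mn0 t0.
have npos x : 0 <= x -> 0 <= n x t.
  by move=> x0; rewrite hs // mulr_ge0 ?n0p // expR_ge0.
have i1 : (@lebesgue_measure R).-integrable `[0%R, +oo[ (EFin \o (fun x => phi x * n x t)).
  apply: (@intD_le _ _ (fun x => M * n x t)).
  - exact: measurable_realfun.measurable_funM.
  - move=> x x0; rewrite normrM (ger0_norm (npos x x0)).
    rewrite (ger0_norm (mulr_ge0 M0 (npos x x0))).
    by apply: ler_wpM2r; [exact: npos | exact: hM].
  - exact: intD_Z.
have i2 := @intD_Z _ (phi 0) _ iN.
have i3 := @intD_lin _ 1 (- phi 0) _ _ i1 iN.
have mF : measurable_fun (`[0%R, +oo[ : set R) (fun x => 1 * (phi x * n x t) + - phi 0 * n x t).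
  apply: measurable_realfun.measurable_funD.
    apply: measurable_realfun.measurable_funM => //.
    exact: measurable_realfun.measurable_funM.
  exact: measurable_realfun.measurable_funM.
have i3' : (@lebesgue_measure R).-integrable `[0%R, +oo[ (EFin \o (fun x => phi x * n x t - phi 0 * n x t)).
  apply: eq_integrable i3; first exact: measurable_itv.
  by move=> x _ /=; rewrite mul1r mulNr.
have mF' : measurable_fun (`[0%R, +oo[ : set R) (fun x => phi x * n x t - phi 0 * n x t).
  apply: eq_measurable_fun mF => x _; by rewrite mul1r mulNr.
have i4 : (@lebesgue_measure R).-integrable `[0%R, +oo[ (EFin \o (fun x => `|phi x * n x t - phi 0 * n x t|)).
  apply: (@intD_le _ _ (fun x => phi x * n x t - phi 0 * n x t)) => //.
  - exact: (measurableT_comp (@measurable_realfun.normr_measurable R setT) mF').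
  - by move=> x _; rewrite normr_id.
have i5 := @intD_lin _ (e / 2) (2 * M * expR (g del * t)) _ _ iN in0.
have key : `|\int[@lebesgue_measure R]_(x in `[0%R, +oo[) (phi x * n x t) - phi 0 * rhoC n t|
    <= e / 2 * rhoC n t + 2 * M * expR (g del * t) * N.
  rewrite /rhoC -RintegralZl // -RintegralB //.
  apply: le_trans.
    apply: le_normr_Rintegral; [exact: measurable_itv | exact: i3'].
  apply: le_trans.
    apply: le_Rintegral; [exact: measurable_itv | exact: i4 | exact: i5 | ].
    move=> x /=; rewrite in_itv /= andbT => x0.
    have nx := npos x x0.
    have E0 : 0 <= 2 * M * expR (g del * t) * n0 x.
      by rewrite !mulr_ge0 ?n0p ?expR_ge0 //.
    rewrite -mulrBl normrM (ger0_norm nx).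
    case: (ltP x del) => xd.
    - rewrite -[X in X <= _]addr0; apply: lerD; last exact: E0.
      by rewrite ler_wpM2r // distrC ltW // Hdel // x0.
    - rewrite -[X in X <= _]add0r; apply: lerD; first by rewrite mulr_ge0 // ltW.
      have g1 : g x <= g del.
        move: xd; rewrite le_eqVlt => /predU1P[-> //|xd].
        exact/ltW/gdec.
      rewrite hs // [n0 x * _]mulrC mulrA.
      apply: ler_wpM2r; first exact: n0p.
      apply: ler_pM; [exact: normr_ge0 | exact: expR_ge0 | | ].
      + have H1 := ler_normB (phi x) (phi 0).
        have := hM x x0; have := hM 0 (lexx 0); lra.
      + by rewrite ler_expR ler_wpM2r.
  rewrite RintegralD //; try exact: intD_Z.
    rewrite RintegralZl // RintegralZl //.
set I := \int[@lebesgue_measure R]_(x in `[0%R, +oo[) (phi x * n x t) in key *.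
set rho := rhoC n t in key rpos lb *.
have rne : rho != 0 by rewrite gt_eqF.
have -> : phi 0 - I / rho = - ((I - phi 0 * rho) / rho) by field.
have rinv : 0 < rho^-1 by rewrite invr_gt0.
rewrite normrN normrM (gtr0_norm rinv).
rewrite ltr_pdivrMr //.
apply: le_lt_trans key _.
have ce : 0 < c * expR (g a * t) by rewrite mulr_gt0 // expR_gt0.
have Xeq : 2 * M * expR (g del * t) * N =
    (2 * M * N / c * expR (- (g a - g del) * t)) * (c * expR (g a * t)).
  have -> : expR (g del * t) = expR (- (g a - g del) * t) * expR (g a * t).
    by rewrite -expRD; congr expR; ring.
  have cne : c != 0 by rewrite gt_eqF.
  by field.
have X1 : 2 * M * expR (g del * t) * N < e / 2 * (c * expR (g a * t)).
  by rewrite Xeq ltr_pM2r.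
have X2 : e / 2 * (c * expR (g a * t)) <= e / 2 * rho.
  by apply: ler_wpM2l; [exact: ltW | exact: (lb t t0)].
lra.
Unshelve. all: by end_near.
Qed.

Theorem lemma2p2 (R : realType) (r d n0 : R -> R) (n : R -> R -> R) :
  lipschitz_on_halfline r -> lipschitz_on_halfline d ->
  r 0 > d 0 -> d 0 > 0 ->
  (forall x : R, 0 < x -> derivable r x 1 /\ derive1 r x < 0) ->
  r x @[x --> +oo] --> 0 ->
  (forall x : R, 0 < x -> derivable d x 1 /\ derive1 d x > 0) ->
  (forall x : R, 0 <= x -> 0 <= n0 x) ->
  (@lebesgue_measure R).-integrable `[0%R, +oo[ (EFin \o n0) ->
  (exists eps : R, 0 < eps /\ forall x : R, 0 <= x < eps -> 0 < n0 x) ->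
  (* n is the solution of d/dt n(x,t) = (r(x) - d(x)) n(x,t), n(x,0) = n0(x) *)
  (forall x : R, 0 <= x ->
     n x 0 = n0 x /\
     n x t @[t --> 0^'+] --> n0 x /\
     (forall t : R, 0 < t ->
        derivable (n x) t 1 /\ derive1 (n x) t = (r x - d x) * n x t)) ->
  (rhoC n t @[t --> +oo] --> +oo /\
   exists lam C : R, 0 < lam /\ 0 < C /\
     forall t : R, 0 <= t -> C * expR (lam * t) <= rhoC n t) /\
  weak_cvg_to_dirac0 n.
Proof.
move=> lr ld rd0 d0 rder _ dder n0p in0 [eps [eps0 pn0]] hsol.
pose g x := r x - d x.
have hs : forall x t, 0 <= x -> 0 <= t -> n x t = n0 x * expR (g x * t).
  move=> x t x0 t0; have [h1 [h2 h3]] := hsol x x0.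
  exact: (@sol_formula _ (g x) (n0 x) (n x) h1 h2 h3 t t0).
have mg : measurable_fun (`[0%R, +oo[ : set R) g.
  apply: measurable_realfun.measurable_funB; exact: lip_meas.
have gdec : forall x y, 0 < x -> x < y -> g y < g x.
  move=> x y x0 xy; rewrite /g.
  have := @strict_decr _ r rder x y x0 xy.
  have := @strict_incr _ d dder x y x0 xy.
  lra.
have [Kr [Kr0 hr]] := @lip0 _ r lr.
have [Kd [Kd0 hd]] := @lip0 _ d ld.
have gl : forall x, 0 <= x -> g 0 - (Kr + Kd) * x <= g x <= g 0 + (Kr + Kd) * x.
  move=> x x0; have h1 := hr x x0; have h2 := hd x x0.
  have := ler_norm (r x - r 0); have := ler_norm (r 0 - r x).
  have := ler_norm (d x - d 0); have := ler_norm (d 0 - d x).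
  rewrite (distrC (r 0)) (distrC (d 0)) /g.
  move=> q1 q2 q3 q4; apply/andP; split; nra.
pose B := g 0 + (Kr + Kd).
have gB : forall x, 0 <= x -> g x <= B.
  move=> x x0; case: (leP x 1) => x1.
    have /andP[_ H] := gl x x0.
    apply: le_trans H _; rewrite /B lerD2l.
    by rewrite -[leRHS]mulr1 ler_wpM2l // addr_ge0.
  have /andP[_ H] := gl 1 ler01.
  apply: le_trans (ltW (gdec 1 x ltr01 x1)) _.
  by apply: le_trans H _; rewrite /B mulr1.
have g00 : 0 < g 0 by rewrite /g subr_gt0.
pose L := Kr + Kd + 1.
have L0 : 0 < L by rewrite /L; lra.
have [a [a0 [ae aK]]] : exists a : R, 0 < a /\ a < eps /\ L * a <= g 0 / 2.
  case: (leP (eps / 2) (g 0 / (2 * L))) => h.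
  - exists (eps / 2); split; first lra. split; first lra.
    have E : L * (g 0 / (2 * L)) = g 0 / 2 by field; rewrite gt_eqF.
    by rewrite -E ler_wpM2l // ltW.
  - exists (g 0 / (2 * L)); split; first by rewrite divr_gt0 // mulr_gt0.
    split; first lra.
    have E : L * (g 0 / (2 * L)) = g 0 / 2 by field; rewrite gt_eqF.
    by rewrite E.
have ga0 : 0 < g a.
  have /andP[H _] := gl a (ltW a0).
  have : (Kr + Kd) * a <= L * a by apply: ler_wpM2r; [exact: ltW | rewrite /L; lra].
  lra.
have pa : forall x, 0 < x <= a -> 0 < n0 x.
  move=> x /andP[x0 xa]; apply: pn0; rewrite ltW //=; lra.
have [cpos lb] := @lower_bd _ _ _ _ B a hs mg gB gdec n0p in0 a0 pa.
split; last exact: (@weak _ _ _ _ B eps hs mg gB gdec n0p in0 eps0 pn0).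
split; last by exists (g a), (fine (\int[@lebesgue_measure R]_(x in `]0%R, a%R]) (n0 x)%:E)%E).
exact: (@growth _ (rhoC n) _ (g a) cpos ga0 lb).
Qed.
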